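(* Let $R_1,R_2$ be rings and $M$ an $(R_1,R_2)$-bimodule. The formal triangular matrix ring $\begin{pmatrix} R_1 & M\\ 0 & R_2\end{pmatrix}$ is NJ-symmetric if and only if $R_1$ and $R_2$ are NJ-symmetric.
   Context: Rings are associative with identity. $N(S)$ is the set of nilpotent elements, $J(S)$ the Jacobson radical of a ring $S$. $S$ is NJ-symmetric if for all $a,b,c\in S$, $abc\in N(S)$ implies $bac\in J(S)$. *)

(* Defs.v *)
From HB Require Import structures.
From mathcomp Require Import all_boot all_order all_algebra.
Set Implicit Arguments. Unset Strict Implicit. Unset Printing Implicit Defensive.
Import GRing.Theory.
Local Open Scope ring_scope.

(* Rings: associative with identity (the zero ring is allowed): pzRingType. *)

Definition nilpotent_el (S : pzRingType) (x : S) : Prop := exists n : nat, x ^+ n = 0.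

Definition left_ideal (S : pzRingType) (I : S -> Prop) : Prop :=
  [/\ I 0, (forall x y, I x -> I y -> I (x + y)) & (forall r x, I x -> I (r * x))].

Definition maximal_left_ideal (S : pzRingType) (I : S -> Prop) : Prop :=
  [/\ left_ideal I, ~ (forall x, I x) &
      (forall K : S -> Prop, left_ideal K -> (forall x, I x -> K x) ->
         ~ (forall x, K x) -> forall x, K x -> I x)].

Definition jacobson (S : pzRingType) (x : S) : Prop :=
  forall I : S -> Prop, maximal_left_ideal I -> I x.

Definition NJ_symmetric (S : pzRingType) : Prop :=
  forall a b c : S, nilpotent_el (a * b * c) -> jacobson (b * a * c).

Record bimodule (R1 R2 : pzRingType) (M : zmodType) := Bimodule {
  lact : R1 -> M -> M;
  ract : M -> R2 -> M;
  lactDl : forall (a b : R1) (m : M), lact (a + b) m = lact a m + lact b m;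
  lactDr : forall (a : R1) (m n : M), lact a (m + n) = lact a m + lact a n;
  lactA : forall (a b : R1) (m : M), lact (a * b) m = lact a (lact b m);
  lact1 : forall m : M, lact 1 m = m;
  ractDl : forall (m n : M) (r : R2), ract (m + n) r = ract m r + ract n r;
  ractDr : forall (m : M) (r s : R2), ract m (r + s) = ract m r + ract m s;
  ractA : forall (m : M) (r s : R2), ract m (r * s) = ract (ract m r) s;
  ract1 : forall m : M, ract m 1 = m;
  bimodA : forall (a : R1) (m : M) (r : R2), ract (lact a m) r = lact a (ract m r)
}.

(* The formal triangular matrix ring [[R1, M], [0, R2]] (indexed by the
   bimodule structure B); the element ((a, m), b) stands for the matrix
   [[a, m], [0, b]]. *)
Definition tri_ring (R1 R2 : pzRingType) (M : zmodType) (B : bimodule R1 R2 M) : Type :=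
  (R1 * M * R2)%type.

Section Triangular.
Variables (R1 R2 : pzRingType) (M : zmodType) (B : bimodule R1 R2 M).
Local Notation tri_ring := (tri_ring B).

HB.instance Definition _ := GRing.Zmodule.on tri_ring.

Definition tri_one : tri_ring := ((1, 0), 1).
Definition tri_mul (x y : tri_ring) : tri_ring :=
  ((x.1.1 * y.1.1, lact B x.1.1 y.1.2 + ract B x.1.2 y.2), x.2 * y.2).

Lemma lact0r (a : R1) : lact B a 0 = 0.
Proof. by apply: (@addrI _ (lact B a 0)); rewrite -lactDr !addr0. Qed.
Lemma lact0l (m : M) : lact B 0 m = 0.
Proof. by apply: (@addrI _ (lact B 0 m)); rewrite -lactDl !addr0. Qed.
Lemma ract0r (m : M) : ract B m 0 = 0.
Proof. by apply: (@addrI _ (ract B m 0)); rewrite -ractDr !addr0. Qed.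
Lemma ract0l (r : R2) : ract B 0 r = 0.
Proof. by apply: (@addrI _ (ract B 0 r)); rewrite -ractDl !addr0. Qed.

Lemma tri_mulA : associative tri_mul.
Proof.
move=> [[a m] b] [[a' m'] b'] [[a'' m''] b'']; rewrite /tri_mul /=.
congr ((_, _), _); rewrite ?mulrA //.
rewrite lactDr ractDl lactA bimodA ractA addrA; congr (_ + _).
Qed.
Lemma tri_mul1 : left_id tri_one tri_mul.
Proof. by move=> [[a m] b]; rewrite /tri_mul /= !mul1r lact1 ract0l addr0. Qed.
Lemma tri_mulr1 : right_id tri_one tri_mul.
Proof. by move=> [[a m] b]; rewrite /tri_mul /= !mulr1 ract1 lact0r add0r. Qed.
Lemma tri_mulDl : left_distributive tri_mul +%R.
Proof.
move=> [[a m] b] [[a' m'] b'] [[a'' m''] b'']; rewrite /tri_mul /=.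
congr ((_, _), _); rewrite ?mulrDl // lactDl ractDl.
by rewrite addrACA.
Qed.
Lemma tri_mulDr : right_distributive tri_mul +%R.
Proof.
move=> [[a m] b] [[a' m'] b'] [[a'' m''] b'']; rewrite /tri_mul /=.
congr ((_, _), _); rewrite ?mulrDr // lactDr ractDr.
by rewrite addrACA.
Qed.

HB.instance Definition _ :=
  GRing.Zmodule_isPzRing.Build tri_ring tri_mulA tri_mul1 tri_mulr1 tri_mulDl tri_mulDr.

End Triangular.

(* Main.v *)
Require Import Defs.
From HB Require Import structures.
From mathcomp Require Import all_boot all_order all_algebra.
From Stdlib Require Import Classical.
Import GRing.Theory.
Local Open Scope ring_scope.

Section Gen.
Variable S : pzRingType.

Lemma li_full (K : S -> Prop) : left_ideal K -> K 1 -> forall x, K x.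
Proof. by case=> _ _ KM K1 x; rewrite -(mulr1 x); apply: KM. Qed.

Lemma max_comax (K : S -> Prop) z : maximal_left_ideal K -> ~ K z ->
  exists k r, K k /\ 1 = k + r * z.
Proof.
case=> [[K0 KD KM] Kfull Kmax] nz.
pose L := fun w => exists k r, K k /\ w = k + r * z.
have Lid : left_ideal L.
  split.
  - by exists 0, 0; rewrite !mul0r !addr0.
  - move=> x y [k1 [r1 [K1 ->]]] [k2 [r2 [K2 ->]]].
    exists (k1 + k2), (r1 + r2); split; first exact: KD.
    by rewrite mulrDl addrACA.
  - move=> r x [k1 [r1 [K1 ->]]]; exists (r * k1), (r * r1); split; first exact: KM.
    by rewrite mulrDr mulrA.
have KL : forall x, K x -> L x by move=> x Kx; exists x, 0; rewrite !mul0r !addr0.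
case: (classic (forall x, L x)) => [Lf|Lnf]; first exact: Lf 1.
exfalso; apply: nz; apply: (Kmax L Lid KL Lnf); exists 0, 1.
by rewrite !mul1r !add0r.
Qed.
End Gen.
Arguments max_comax {S K z}.
Arguments li_full {S K}.

Section S.
Variables (R1 R2 : pzRingType) (M : zmodType) (B : bimodule R1 R2 M).
Local Notation T := (tri_ring B).
Lemma addE (a a' : R1) (m m' : M) (b b' : R2) : ((a,m),b) + ((a',m'),b') = ((a+a',m+m'),b+b') :> T.
Proof. by []. Qed.
Lemma oppE (a : R1) (m : M) (b : R2) : - ((a,m),b) = ((-a,-m),-b) :> T.
Proof. by []. Qed.
Lemma zeroE : 0 = ((0,0),0) :> T. Proof. by []. Qed.
Lemma oneE : 1 = ((1,0),1) :> T. Proof. by []. Qed.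
Lemma mulE (x y : T) : x * y = ((x.1.1 * y.1.1, lact B x.1.1 y.1.2 + ract B x.1.2 y.2), x.2 * y.2).
Proof. by []. Qed.


Ltac tsimp := do 3 rewrite ?mulE ?addE ?oppE /= ?lact0r ?lact0l ?ract0r ?ract0l ?lact1 ?ract1 ?addr0 ?add0r ?mul0r ?mulr0 ?mulr1 ?mul1r ?addrN ?addNr ?oppr0.

Lemma exp11 (x : T) n : (x ^+ n).1.1 = x.1.1 ^+ n.
Proof. elim: n => [|n IH]; first by rewrite !expr0. by rewrite !exprS mulE /= IH. Qed.
Lemma exp2 (x : T) n : (x ^+ n).2 = x.2 ^+ n.
Proof. elim: n => [|n IH]; first by rewrite !expr0. by rewrite !exprS mulE /= IH. Qed.

Lemma expd1 (a : R1) n : (((a,0),0) : T) ^+ n.+1 = ((a ^+ n.+1, 0), 0).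
Proof.
elim: n => [|n IH]; first by rewrite expr1.
by rewrite exprS IH mulE /= lact0r ract0l !addr0 !mul0r.
Qed.
Lemma expd2 (a : R2) n : (((0,0),a) : T) ^+ n.+1 = ((0, 0), a ^+ n.+1).
Proof.
elim: n => [|n IH]; first by rewrite expr1.
by rewrite exprS IH mulE /= lact0r ract0l !addr0 !mul0r.
Qed.

Lemma mulpair (x y : T) (a : R1) (m : M) (b : R2) :
  x.1.1 * y.1.1 = a -> lact B x.1.1 y.1.2 + ract B x.1.2 y.2 = m -> x.2 * y.2 = b ->
  x * y = ((a, m), b).
Proof. by move=> <- <- <-. Qed.

Lemma lift1 (I : R1 -> Prop) : maximal_left_ideal I ->
  maximal_left_ideal (fun X : T => I X.1.1).
Proof.
case=> [[I0 ID IM] If Imax]; split.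
- split => //=; first by move=> x y; apply: ID.
  by move=> r x; apply: IM.
- by move=> H; apply: If => x; exact: (H (((x,0),0) : T)).
move=> K [K0 KD KM] IK Knf [[x m] y] KX /=.
pose K1 := fun a => K ((a, 0), 0) : Prop.
have K1id : left_ideal K1.
  split; rewrite /K1.
  - exact: K0.
  - by move=> a b Ka Kb; have := KD _ _ Ka Kb; rewrite addE !addr0.
  - move=> r a Ka; have := KM (((r,0),0) : T) _ Ka.
    by rewrite mulE /= lact0r ract0l !addr0 !mul0r.
have IK1 : forall a, I a -> K1 a by move=> a Ia; apply: IK.
have K1nf : ~ (forall a, K1 a).
  move=> H; apply: Knf; apply: li_full => //.
  have := KD _ _ (H 1) (IK (((0,0),1) : T) I0); by rewrite addE !addr0 !add0r.
apply: (Imax K1 K1id IK1 K1nf); rewrite /K1.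
have := KD _ _ (KM (((1,0),0) : T) _ KX) (IK (((0,- m),0) : T) I0).
  by tsimp.
Qed.

Lemma lift2 (I : R2 -> Prop) : maximal_left_ideal I ->
  maximal_left_ideal (fun X : T => I X.2).
Proof.
case=> [[I0 ID IM] If Imax]; split.
- split => //=; first by move=> x y; apply: ID.
  by move=> r x; apply: IM.
- by move=> H; apply: If => x; exact: (H (((0,0),x) : T)).
move=> K [K0 KD KM] IK Knf [[x m] y] KX /=.
pose K1 := fun a => K ((0, 0), a) : Prop.
have K1id : left_ideal K1.
  split; rewrite /K1.
  - exact: K0.
  - by move=> a b Ka Kb; have := KD _ _ Ka Kb; rewrite addE !addr0.
  - move=> r a Ka; have := KM (((0,0),r) : T) _ Ka.
    by rewrite mulE /= lact0r ract0l !addr0 !mul0r.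
have IK1 : forall a, I a -> K1 a by move=> a Ia; apply: IK.
have K1nf : ~ (forall a, K1 a).
  move=> H; apply: Knf; apply: li_full => //.
  have := KD _ _ (H 1) (IK (((1,0),0) : T) I0); by rewrite addE !addr0 !add0r.
apply: (Imax K1 K1id IK1 K1nf); rewrite /K1.
have := KM (((0,0),1) : T) _ KX.
by rewrite mulE /= lact0l ract0l !addr0 !mul0r !mul1r.
Qed.

Lemma J_tri x m y : jacobson x -> jacobson y -> jacobson (((x,m),y) : T).
Proof.
move=> Jx Jy K Kmax; have Kmax' := Kmax.
case: Kmax' => [[K0 KD KM] Knf Kmx].
have Kn1 : ~ K 1 by move=> K1; apply: Knf; apply: li_full.
have KN : forall n, K ((0,n),0).
  move=> n; apply: NNPP => nK.
  have [k [r [Kk E]]] := max_comax Kmax nK.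
  apply: Kn1.
  have -> : (1 : T) = (((1, lact B r.1.1 n), 1) : T) * k.
    move: E; case: k Kk => [[k1 k2] k3] Kk; tsimp; rewrite oneE => -[<- E2 <-].
    by tsimp; rewrite -E2.
  exact: KM.
have P1 : forall k, K k -> K ((k.1.1, 0), 0).
  move=> [[k1 k2] k3] Kk.
  have := KD _ _ (KM (((1,0),0) : T) _ Kk) (KN (- k2)).
  by tsimp.
have P2 : forall k, K k -> K ((0, 0), k.2).
  move=> [[k1 k2] k3] Kk; have := KM (((0,0),1) : T) _ Kk.
  by tsimp.
have -> : ((x,m),y) = ((x,0),0) + ((0,m),0) + ((0,0),y) :> T.
  by tsimp.
have Kx1 : K ((1,0),0) -> K ((x,0),0).
  move=> H; have := KM (((x,0),0) : T) _ H.
  by tsimp.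
case: (classic (K ((0,0),1))) => [K2|nK2].
- have Ky : K ((0,0),y).
    have := KM (((0,0),y) : T) _ K2.
    by tsimp.
  apply: (KD) => //; apply: (KD) => //.
  pose I1 := fun a => K ((a, 0), 0) : Prop.
  suff : maximal_left_ideal I1 by move/Jx.
  split.
  + split; rewrite /I1.
    * exact: K0.
    * by move=> a b Ka Kb; have := KD _ _ Ka Kb; rewrite addE !addr0.
    * move=> r a Ka; have := KM (((r,0),0) : T) _ Ka.
      by rewrite mulE /= lact0r ract0l !addr0 !mul0r.
  + move=> H; apply: Kn1; have := KD _ _ (H 1) K2; by rewrite addE !addr0 !add0r.
  + move=> L Lid IL Lnf l Ll; rewrite /I1.
    have [L0 LD LM] := Lid.
    have L'id : left_ideal (fun X : T => L X.1.1).
      split => //=; first by move=> a b; apply: LD.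
      by move=> r a; apply: LM.
    have KL' : forall X, K X -> L X.1.1 by move=> X KX; apply: IL; exact: P1.
    have L'nf : ~ (forall X : T, L X.1.1).
      by move=> H; apply: Lnf => a; exact: (H (((a,0),0) : T)).
    exact: (Kmx _ L'id KL' L'nf ((l,0),0)).
- have K1 : K ((1,0),0).
    have [k [r [Kk E]]] := max_comax Kmax nK2.
    have := P1 _ Kk; suff -> : k.1.1 = 1 by [].
    move: E; rewrite mulE /= !mulr0 oneE; case: k Kk => [[k1 k2] k3] _.
    by rewrite addE !addr0 => -[].
  apply: (KD); first by apply: (KD) => //; exact: Kx1.
  pose I2 := fun a => K ((0, 0), a) : Prop.
  suff : maximal_left_ideal I2 by move/Jy.
  split.
  + split; rewrite /I2.
    * exact: K0.
    * by move=> a b Ka Kb; have := KD _ _ Ka Kb; rewrite addE !addr0.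
    * move=> r a Ka; have := KM (((0,0),r) : T) _ Ka.
      by rewrite mulE /= lact0r ract0l !addr0 !mul0r.
  + by move=> H; apply: nK2; exact: H.
  + move=> L Lid IL Lnf l Ll; rewrite /I2.
    have [L0 LD LM] := Lid.
    have L'id : left_ideal (fun X : T => L X.2).
      split => //=; first by move=> a b; apply: LD.
      by move=> r a; apply: LM.
    have KL' : forall X, K X -> L X.2 by move=> X KX; apply: IL; exact: P2.
    have L'nf : ~ (forall X : T, L X.2).
      by move=> H; apply: Lnf => a; exact: (H (((0,0),a) : T)).
    exact: (Kmx _ L'id KL' L'nf ((0,0),l)).
Qed.
End S.
Ltac tsimp := do 3 rewrite ?mulE ?addE ?oppE /= ?lact0r ?lact0l ?ract0r ?ract0l ?lact1 ?ract1 ?addr0 ?add0r ?mul0r ?mulr0 ?mulr1 ?mul1r ?addrN ?addNr ?oppr0.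

Theorem corollary2p22 (R1 R2 : pzRingType) (M : zmodType) (B : bimodule R1 R2 M) :
  NJ_symmetric (tri_ring B) <-> NJ_symmetric R1 /\ NJ_symmetric R2.
Proof.
split.
- move=> H; split.
  + move=> a b c [n En] I Imax.
    have Hn : nilpotent_el ((((a,0),0) : tri_ring B) * ((b,0),0) * ((c,0),0)).
      exists n.+1.
      have -> : (((a,0),0) : tri_ring B) * ((b,0),0) * ((c,0),0) = ((a*b*c,0),0).
        by tsimp.
      by rewrite expd1 exprS En !mulr0.
    have := H _ _ _ Hn _ (@lift1 _ _ _ B _ Imax).
    by rewrite !mulE /=.
  + move=> a b c [n En] I Imax.
    have Hn : nilpotent_el ((((0,0),a) : tri_ring B) * ((0,0),b) * ((0,0),c)).
      exists n.+1.
      have -> : (((0,0),a) : tri_ring B) * ((0,0),b) * ((0,0),c) = ((0,0),a*b*c).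
        by tsimp.
      by rewrite expd2 exprS En !mulr0.
    have := H _ _ _ Hn _ (@lift2 _ _ _ B _ Imax).
    by rewrite !mulE /=.
- move=> [H1 H2] [[x1 x2] x3] [[y1 y2] y3] [[z1 z2] z3] [n En].
  have N1 : nilpotent_el (x1 * y1 * z1).
    exists n; move: (congr1 (fun w : tri_ring B => w.1.1) En) => /=.
    by rewrite exp11 !mulE /=.
  have N2 : nilpotent_el (x3 * y3 * z3).
    exists n; move: (congr1 (fun w : tri_ring B => w.2) En) => /=.
    by rewrite exp2 !mulE /=.
  rewrite !mulE /=; apply: J_tri; [exact: H1 N1 | exact: H2 N2].
Qed.
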